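(* Let $f\in R(A_2)$, $g\in R(A_1^* )$, $k\in K_2$, let $x\in D_2=D(A_2)\cap D(A_1^* )$ be the unique solution of $A_2x=f$, $A_1^*x=g$, $\pi_2x=k$, and let $\tilde x\in H_2$ be arbitrary. Set $e:=x-\tilde x$, $e_{A_1}:=\pi_{A_1}e$, $e_{A_2^*}:=\pi_{A_2^*}e$, $e_{K_2}:=\pi_2e$. Then: (i) $e=e_{A_1}+e_{K_2}+e_{A_2^*}\in R(A_1)\oplus K_2\oplus R(A_2^* )$ and $\|e\|_{H_2}^2=\|e_{A_1}\|_{H_2}^2+\|e_{K_2}\|_{H_2}^2+\|e_{A_2^*}\|_{H_2}^2$; (ii) $e_{A_1}=x_g-\pi_{A_1}\tilde x$ satisfies $\|e_{A_1}\|_{H_2}=\min_{\zeta\in D(A_1^* )}\big(c_1\|A_1^*\zeta-g\|_{H_1}+\|\zeta-\tilde x\|_{H_2}\big)$, with the minimum attained at $\hat\zeta:=e_{A_1}+\tilde x=x-\pi_{N(A_1^* )}e\in D(A_1^* )$, for which $A_1^*\hat\zeta=g$; (iii) $e_{A_2^*}=x_f-\pi_{A_2^*}\tilde x$ satisfies $\|e_{A_2^*}\|_{H_2}=\min_{\xi\in D(A_2)}\big(c_2\|A_2\xi-f\|_{H_3}+\|\xi-\tilde x\|_{H_2}\big)$, with the minimum attained at $\hat\xi:=e_{A_2^*}+\tilde x=x-\pi_{N(A_2)}e\in D(A_2)$, for which $A_2\hat\xi=f$; (iv) $e_{K_2}=k-\pi_2\tilde x$ satisfies $\|e_{K_2}\|_{H_2}=\min_{\varphi\in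 D(A_1)}\min_{\phi\in D(A_2^* )}\|k-\tilde x+A_1\varphi+A_2^*\phi\|_{H_2}$, with the minimum attained at $\hat\varphi:=(\mathcal{A}_1)^{-1}\pi_{A_1}\tilde x\in D(\mathcal{A}_1)$, $\hat\phi:=(\mathcal{A}_2^* )^{-1}\pi_{A_2^*}\tilde x\in D(\mathcal{A}_2^* )$, for which $A_1\hat\varphi+A_2^*\hat\phi=(1-\pi_2)\tilde x$.
   Context: Let $H_0,\dots,H_4$ be Hilbert spaces and, for $\ell=0,\dots,3$, $A_\ell:D(A_\ell)\subset H_\ell\to H_{\ell+1}$ densely defined closed linear operators with Hilbert space adjoints $A_\ell^*$, satisfying $R(A_\ell)\subset N(A_{\ell+1})$ for $\ell=0,1,2$. Standing assumption: $R(A_1)$ and $R(A_2)$ are closed and $K_2$ is finite dimensional. $K_2:=N(A_2)\cap N(A_1^* )$, $\pi_2:H_2\to K_2$ orthogonal projector; $\pi_{A_1}$, $\pi_{A_2^*}$ are the orthogonal projectors of $H_2$ onto $R(A_1)$, $R(A_2^* )$; $\pi_{N(A_1^* )}:=1-\pi_{A_1}$, $\pi_{N(A_2)}:=1-\pi_{A_2^*}$. Reduced operators $\mathcal{A}_\ell:=A_\ell|_{D(A_\ell)\cap\overline{R(A_\ell^* )}}$, $\mathcal{A}_\ell^*:=A_\ell^*|_{D(A_\ell^* )\cap\overline{R(A_\ell)}}$ (injective). $x_f:=(\mathcal{A}_2)^{-1}f$, $x_g:=(\mathcal{A}_1^* )^{-1}g$. $c_\ell\in(0,\infty)$ is the best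 constant with $\|x\|_{H_\ell}\le c_\ell\|A_\ell x\|_{H_{\ell+1}}$ for all $x\in D(\mathcal{A}_\ell)$ (equivalently $\|y\|_{H_{\ell+1}}\le c_\ell\|A_\ell^*y\|_{H_\ell}$ for $y\in D(\mathcal{A}_\ell^* )$). *)

(* Defs.v *)
(* Real Hilbert spaces are modelled as complete
   normed R-modules equipped with an inner product inducing the norm. *)
From HB Require Import structures.
From mathcomp Require Import all_boot all_order all_algebra.
From mathcomp Require Import all_classical all_reals all_analysis.
Set Implicit Arguments. Unset Strict Implicit. Unset Printing Implicit Defensive.
Import Order.TTheory GRing.Theory Num.Theory.
Import numFieldNormedType.Exports.
Local Open Scope classical_set_scope.
Local Open Scope ring_scope.

Section Defs.
Context {R : realType}.

Definition is_inner (H : normedModType R) (ip : H -> H -> R) : Prop :=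
  (forall x y, ip x y = ip y x) /\
  (forall (a : R) x y z, ip (a *: x + y) z = a * ip x z + ip y z) /\
  (forall x, ip x x = `|x| ^+ 2).

Definition lin_subspace {H : normedModType R} (D : set H) : Prop :=
  D 0 /\ forall (a : R) x y, D x -> D y -> D (a *: x + y).

Definition linear_on {H H' : normedModType R} (D : set H) (A : H -> H') : Prop :=
  forall (a : R) x y, D x -> D y -> A (a *: x + y) = a *: A x + A y.

Definition dd_closed_op {H H' : normedModType R} (D : set H) (A : H -> H') : Prop :=
  [/\ lin_subspace D, linear_on D A, closure D = setT &
      closed [set p : H * H' | D p.1 /\ A p.1 = p.2]].

Definition is_adjoint {H H' : normedModType R} (ip : H -> H -> R) (ip' : H' -> H' -> R)
  (D : set H) (A : H -> H') (Ds : set H') (As : H' -> H) : Prop :=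
  (forall y, Ds y <-> exists z : H, forall x, D x -> ip' (A x) y = ip x z) /\
  (forall x y, D x -> Ds y -> ip' (A x) y = ip x (As y)).

Definition kern {H H' : normedModType R} (D : set H) (A : H -> H') : set H :=
  [set x | D x /\ A x = 0].

Definition finite_dim {H : normedModType R} (S : set H) : Prop :=
  exists s : seq H, forall x, S x ->
    exists c : nat -> R, x = \sum_(i < size s) c i *: nth 0 s i.

Definition oproj {H : normedModType R} (ip : H -> H -> R) (S : set H) (x : H) : H :=
  xget 0 [set y | S y /\ forall z, S z -> ip (x - y) z = 0].

(* inverse of the reduced operator A|_{D ∩ Cl}, where Cl = closure of the range
   of the adjoint *)
Definition rinv {H H' : normedModType R} (D Cl : set H) (A : H -> H') (y : H') : H :=
  xget 0 [set x | D x /\ Cl x /\ A x = y].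

Definition best_const {H H' : normedModType R} (D Cl : set H) (A : H -> H') (c : R) : Prop :=
  0 < c /\ (forall x, D x -> Cl x -> `|x| <= c * `|A x|) /\
  (forall c', (forall x, D x -> Cl x -> `|x| <= c' * `|A x|) -> c <= c').

End Defs.

(* Main.v *)
Require Import Defs.
From HB Require Import structures.
From mathcomp Require Import all_boot all_order all_algebra.
From mathcomp Require Import all_classical all_reals all_analysis.
From mathcomp Require Import lra ring.
Import Order.TTheory GRing.Theory Num.Theory.
Import numFieldNormedType.Exports.
Local Open Scope classical_set_scope.
Local Open Scope ring_scope.
Set Implicit Arguments. Unset Strict Implicit. Unset Printing Implicit Defensive.

Section Abs.
Variable R : realType.
Variable V : lmodType R.
Variable ip : V -> V -> R.
Hypothesis ipC : forall x y, ip x y = ip y x.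
Hypothesis ipL : forall (a : R) x y z, ip (a *: x + y) z = a * ip x z + ip y z.
Hypothesis ipP : forall x, 0 <= ip x x.

Definition subsp (S : set V) := S 0 /\ forall (a : R) x y, S x -> S y -> S (a *: x + y).
Definition orth (S : set V) x := forall z, S z -> ip x z = 0.
Definition acomplete (S : set V) := forall u : nat -> V, (forall n, S (u n)) ->
  (forall e, 0 < e -> exists N, forall n m, (N <= n)%N -> (N <= m)%N ->
      ip (u n - u m) (u n - u m) < e) ->
  exists2 l, S l & forall e, 0 < e -> exists N, forall n, (N <= n)%N ->
      ip (u n - l) (u n - l) < e.

Lemma ip0l z : ip 0 z = 0.
Proof. have := ipL 1 0 0 z; rewrite scale1r addr0 mul1r => h; lra. Qed.
Lemma ipDl x y z : ip (x + y) z = ip x z + ip y z.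
Proof. by rewrite -[x]scale1r ipL mul1r scale1r. Qed.
Lemma ipZl a x z : ip (a *: x) z = a * ip x z.
Proof. by rewrite -[a *: x]addr0 ipL ip0l addr0. Qed.
Lemma ipNl x z : ip (- x) z = - ip x z.
Proof. by rewrite -scaleN1r ipZl mulN1r. Qed.
Lemma ipBl x y z : ip (x - y) z = ip x z - ip y z.
Proof. by rewrite ipDl ipNl. Qed.
Lemma ip0r z : ip z 0 = 0.
Proof. by rewrite ipC ip0l. Qed.
Lemma ipDr x y z : ip z (x + y) = ip z x + ip z y.
Proof. by rewrite ipC ipDl !(ipC z). Qed.
Lemma ipZr a x z : ip z (a *: x) = a * ip z x.
Proof. by rewrite ipC ipZl ipC. Qed.
Lemma ipNr x z : ip z (- x) = - ip z x.
Proof. by rewrite ipC ipNl ipC. Qed.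
Lemma ipBr x y z : ip z (x - y) = ip z x - ip z y.
Proof. by rewrite ipDr ipNr. Qed.

Lemma qD x y : ip (x + y) (x + y) = ip x x + 2 * ip x y + ip y y.
Proof. rewrite !ipDl !ipDr (ipC y x); lra. Qed.
Lemma qB x y : ip (x - y) (x - y) = ip x x - 2 * ip x y + ip y y.
Proof. rewrite !ipBl !ipBr (ipC y x); lra. Qed.
Lemma qZ a x : ip (a *: x) (a *: x) = a ^+ 2 * ip x x.
Proof. rewrite ipZl ipZr; lra. Qed.
Lemma qN x : ip (- x) (- x) = ip x x.
Proof. by rewrite ipNl ipNr opprK. Qed.
Lemma qBC x y : ip (x - y) (x - y) = ip (y - x) (y - x).
Proof. by rewrite -qN opprB. Qed.

Lemma CS x y : ip x y ^+ 2 <= ip x x * ip y y.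
Proof.
set a := ip x y; set b := ip y y; set c := ip x x.
have hb : 0 <= b by apply: ipP.
have [b0|bpos] := eqVneq b 0.
  have [a0|anz] := eqVneq a 0; first by rewrite a0 b0; lra.
  have := ipP (x - ((c + 1) / (2 * a)) *: y).
  rewrite qB ipZr qZ -/a -/b -/c b0 mulr0 addr0.
  have -> : 2 * ((c + 1) / (2 * a) * a) = c + 1.
    by field.
  lra.
have := ipP (b *: x - a *: y).
rewrite qB !ipZl !ipZr -/a -/b -/c => h.
have : 0 <= b * (b * c - a ^+ 2).
  move: h; rewrite ?expr2; nra.
have bp : 0 < b by rewrite lt0r bpos.
rewrite pmulr_rge0 //; lra.
Qed.

Lemma sq_small (r K : R) : 0 <= K -> (forall e, 0 < e -> r ^+ 2 <= e * K) -> r = 0.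
Proof.
move=> K0 h; apply/eqP; apply/negPn/negP => rn.
have r2 : 0 < r ^+ 2 by rewrite exprn_even_gt0.
have := h (r ^+ 2 / (2 * (K + 1))).
have e0 : 0 < r ^+ 2 / (2 * (K + 1)) by apply: divr_gt0 => //; lra.
move=> /(_ e0).
have -> : r ^+ 2 / (2 * (K + 1)) * K = r ^+ 2 * (K / (2 * (K + 1))) by rewrite mulrAC -mulrA.
have : K / (2 * (K + 1)) < 1.
  by rewrite ltr_pdivrMr; lra.
nra.
Qed.

End Abs.

Section Abs2.
Variable R : realType.
Definition invS (n : nat) : R := n.+1%:R^-1.

Lemma arch (e : R) : 0 < e -> exists N, forall n, (N <= n)%N -> invS n < e.
Proof.
rewrite /invS.
move=> e0; exists (Num.truncn (e^-1)) => n hn.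
have h := truncnS_gt (e^-1).
have hM : (Num.truncn e^-1).+1%:R <= n.+1%:R :> R by rewrite ler_nat ltnS.
set M : R := n.+1%:R in hM *.
have Mp : 0 < M by rewrite /M ltr0Sn.
have h1 : e * e^-1 = 1 by rewrite mulfV // gt_eqF.
have h2 : M * M^-1 = 1 by rewrite mulfV // gt_eqF.
have h3 : 0 < M^-1 by rewrite invr_gt0.
have h4 : 0 < e^-1 by rewrite invr_gt0.
have h5 : e^-1 < M by apply: lt_le_trans hM.
have h6 : 0 < (M - e^-1) * (e * M^-1) by apply: mulr_gt0; [lra| apply: mulr_gt0].
have : (M - e^-1) * (e * M^-1) = e * (M * M^-1) - M^-1 * (e * e^-1).
  by rewrite mulrBl; congr (_ - _); rewrite mulrCA // mulrA mulrC mulrA [_ * e]mulrC.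
rewrite h2 h1 => h7. rewrite h7 !mulr1 in h6. by rewrite -subr_gt0.
Qed.

End Abs2.

Section Proj.
Variable R : realType.
Variable V : lmodType R.
Variable ip : V -> V -> R.
Hypothesis ipC : forall x y, ip x y = ip y x.
Hypothesis ipL : forall (a : R) x y z, ip (a *: x + y) z = a * ip x z + ip y z.
Hypothesis ipP : forall x, 0 <= ip x x.

Local Notation q v := (ip v v).

Lemma subsp_add (S : set V) x y : subsp S -> S x -> S y -> S (x + y).
Proof. by case=> _ h Sx Sy; rewrite -[x]scale1r; apply: h. Qed.
Lemma subsp_scale (S : set V) a x : subsp S -> S x -> S (a *: x).
Proof. by case=> S0 h Sx; rewrite -[_ *: _]addr0; apply: h. Qed.
Lemma subsp_opp (S : set V) x : subsp S -> S x -> S (- x).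
Proof. by move=> hS Sx; rewrite -scaleN1r; apply: subsp_scale. Qed.
Lemma subsp_sub (S : set V) x y : subsp S -> S x -> S y -> S (x - y).
Proof. by move=> hS Sx Sy; apply: subsp_add => //; apply: subsp_opp. Qed.

Lemma proj_ex (S : set V) x : subsp S -> acomplete ip S -> exists y, S y /\ orth ip S (x - y).
Proof.
move=> hS Sc.
have [S0 SL] := hS.
set E := [set r | exists2 y, S y & r = q (x - y)].
have hE : has_inf E.
  split; first by exists (q (x - 0)); exists 0.
  by exists 0 => r [y _ ->]; apply: ipP.
set d := inf E.
have dle : forall y, S y -> d <= q (x - y).
  by move=> y Sy; apply: (ge_inf hE.2); exists y.
have : forall n : nat, exists y, S y /\ q (x - y) < d + invS R n.
  move=> n; have e0 : 0 < invS R n by rewrite invr_gt0 ltr0Sn.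
  have [r [y Sy ->] lt] := inf_adherent e0 hE.
  by exists y.
move/choice => [u hu].
have key : forall n m, q (u n - u m) <= 2 * invS R n + 2 * invS R m.
  move=> n m; have [Sn ln] := hu n; have [Sm lm] := hu m.
  set a := x - u n; set b := x - u m.
  have Smid : S (2^-1 *: (u n + u m)) by apply: subsp_scale => //; apply: subsp_add.
  have e1 : a + b = 2 *: (x - 2^-1 *: (u n + u m)).
    rewrite scalerBr scalerA mulfV ?scale1r ?pnatr_eq0 // scaler_nat mulr2n.
    by rewrite /a /b opprD addrACA.
  have e2 : u n - u m = b - a.
    by rewrite /a /b opprB [RHS]addrC addrA subrK.
  have h1 := dle _ Smid.
  have h2 : q (a + b) = 4 * q (x - 2^-1 *: (u n + u m)).
    by rewrite e1 qZ //; congr (_ * _); rewrite expr2 -natrM.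
  have h3 := qD ipC ipL a b; have h4 := qB ipC ipL b a.
  rewrite e2 h4; rewrite (ipC b a) in h4.
  have : q a + q b = 2^-1 * (q (a + b) + q (b - a)).
    by rewrite h3 h4; field.
  rewrite (ipC b a) -/a -/b; move: ln lm; rewrite -/a -/b.
  move=> ha hb _. have hc : 4 * d <= q a + 2 * ip a b + q b by rewrite -h3 h2; lra.
  lra.
have cau : forall e, 0 < e -> exists N, forall n m, (N <= n)%N -> (N <= m)%N ->
    q (u n - u m) < e.
  move=> e e0; have e4 : 0 < e / 4 by apply: divr_gt0.
  have [N hN] := arch e4; exists N => n m hn hm.
  have := hN _ hn; have := hN _ hm; have := key n m; lra.
have [l Sl hl] := Sc u (fun n => (hu n).1) cau.
exists l; split => // z Sz.
set A := ip (x - l) z; set B := q z.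
have B0 : 0 <= B by apply: ipP.
set t := A / (B + 1).
have At : A = t * (B + 1) by rewrite /t mulfVK // gt_eqF //; lra.
have star : forall n, t ^+ 2 * (B + 2) + 2 * t * ip (l - u n) z < invS R n.
  move=> n; have [Sn ln] := hu n.
  have S1 : S (t *: z + u n) by apply: SL.
  have h1 := dle _ S1.
  have e1 : x - (t *: z + u n) = (x - u n) - t *: z by rewrite opprD addrA addrAC.
  rewrite e1 qB // ipZr // qZ // in h1.
  have e2 : ip (x - u n) z = A + ip (l - u n) z.
    by rewrite -ipDl // addrA subrK.
  rewrite e2 in h1; rewrite At in h1 *.
  rewrite -/B in h1; nra.
apply: contrapT => tnz.
have tn : t != 0 by apply/eqP => t0; apply: tnz; rewrite At t0 mul0r.
have t2 : 0 < t ^+ 2 by rewrite exprn_even_gt0.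
set p := t ^+ 2 * (B + 2).
have pp : 0 < p by apply: mulr_gt0 => //; lra.
have eps0 : 0 < t ^+ 2 / (4 * (B + 1)) by apply: divr_gt0 => //; lra.
have [N1 hN1] := hl _ eps0.
have p2 : 0 < p / 2 by apply: divr_gt0.
have [N2 hN2] := arch p2.
set n := maxn N1 N2.
have hn1 := hN1 n (leq_maxl _ _).
have hn2 := hN2 n (leq_maxr _ _).
have hs := star n.
set dl := ip (l - u n) z in hs.
have cs : dl ^+ 2 <= q (l - u n) * B by exact: (CS ipC ipL ipP).
rewrite qBC in cs.
have epsE : t ^+ 2 / (4 * (B + 1)) * (4 * (B + 1)) = t ^+ 2 by rewrite mulfVK // gt_eqF //; lra.
have q0 : 0 <= q (u n - l) by apply: ipP.
have hd : dl ^+ 2 <= t ^+ 2 / 4.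
  have : q (u n - l) * B <= t ^+ 2 / (4 * (B + 1)) * B by nra.
  have : t ^+ 2 / (4 * (B + 1)) * B <= t ^+ 2 / 4.
    move: epsE eps0; generalize (t ^+ 2 / (4 * (B + 1))) => ee; move=> *; nra.
  lra.
have hX : (2 * t * dl) ^+ 2 <= (t ^+ 2) ^+ 2.
  have -> : (2 * t * dl) ^+ 2 = 4 * t ^+ 2 * dl ^+ 2 by ring.
  nra.
have hY : (t ^+ 2) ^+ 2 <= (p / 2) ^+ 2.
  have -> : (p / 2) ^+ 2 = (t ^+ 2) ^+ 2 * ((B + 2) ^+ 2 / 4) by rewrite /p; field.
  have : 1 <= (B + 2) ^+ 2 / 4.
    rewrite ler_pdivlMr; last lra.
    nra.
  have : 0 <= (t ^+ 2) ^+ 2 by rewrite exprn_even_ge0.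
  nra.
have hp : p + 2 * t * dl < p / 2 by apply: lt_trans hn2.
nra.
all: first [exact: ipC | exact: ipL | exact: ipP].
Qed.

End Proj.

Section More.
Variable R : realType.
Variable V : lmodType R.
Variable ip : V -> V -> R.
Hypothesis ipC : forall x y, ip x y = ip y x.
Hypothesis ipL : forall (a : R) x y z, ip (a *: x + y) z = a * ip x z + ip y z.
Hypothesis ipP : forall x, 0 <= ip x x.

Local Notation q v := (ip v v).

Lemma orth_subsp (S : set V) : subsp (orth ip S).
Proof.
split; first by move=> z _; rewrite (ip0l ipL).
move=> a x y ox oy z Sz; rewrite ipL ox // oy //; lra.
Qed.

Lemma orth_complete (S : set V) : acomplete ip setT -> acomplete ip (orth ip S).
Proof.
move=> cT u hu cau; have [l _ hl] := cT u (fun _ => I) cau.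
exists l => // z Sz.
apply: (sq_small (K := q z)) => // e e0.
have [N hN] := hl e e0; have := hN N (leqnn N).
have -> : ip l z = ip (l - u N) z by rewrite (ipBl ipL) (hu N z Sz) subr0.
have := CS ipC ipL ipP (l - u N) z.
rewrite (qBC ipC ipL) => h1 h2.
apply: le_trans h1 _; apply: ler_wpM2r => //; exact: ltW.
Qed.

Lemma riesz (M : set V) (phi : V -> R) (C : R) : subsp M -> acomplete ip M -> 0 <= C ->
  (forall a m m', M m -> M m' -> phi (a *: m + m') = a * phi m + phi m') ->
  (forall m, M m -> phi m ^+ 2 <= C * q m) ->
  exists2 y, M y & forall m, M m -> phi m = ip m y.
Proof.
move=> hM cM C0 phiL phiB.
have [M0 ML] := hM.
have phi0 : phi 0 = 0.
  have := phiL 1 0 0 M0 M0; rewrite scale1r addr0 mul1r => h; lra.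
have phiZ : forall a m, M m -> phi (a *: m) = a * phi m.
  by move=> a m Mm; rewrite -[a *: m]addr0 phiL // phi0 addr0.
have phiD : forall m m', M m -> M m' -> phi (m + m') = phi m + phi m'.
  by move=> m m' Mm Mm'; rewrite -[m]scale1r phiL // mul1r scale1r.
have phiN : forall m, M m -> phi (- m) = - phi m.
  by move=> m Mm; rewrite -scaleN1r phiZ // mulN1r.
have phiS : forall m m', M m -> M m' -> phi (m - m') = phi m - phi m'.
  by move=> m m' Mm Mm'; rewrite phiD ?phiN //; apply: subsp_opp.
set N := [set m | M m /\ phi m = 0].
have hN : subsp N.
  split; first by split.
  move=> a x y [Mx px] [My py]; split; first exact: ML.
  by rewrite phiL // px py; lra.
have cN : acomplete ip N.
  move=> u hu cau; have [l Ml hl] := cM u (fun n => (hu n).1) cau.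
  exists l => //; split => //.
  apply: (sq_small (K := C)) => // e e0.
  have [K hK] := hl e e0; have := hK K (leqnn K).
  have -> : phi l = phi (l - u K) by rewrite phiS // ?(hu K).2 ?subr0 //; exact: (hu K).1.
  have := phiB (l - u K) (subsp_sub hM Ml (hu K).1).
  rewrite (qBC ipC ipL) => h1 h2.
  apply: le_trans h1 _; rewrite mulrC; apply: ler_wpM2r => //; exact: ltW.
have [allz|] := pselect (forall m, M m -> phi m = 0).
  by exists 0 => // m Mm; rewrite allz // (ip0r ipC ipL).
move=> /existsNP [m0 /not_implyP [Mm0 nz]].
have [r0 [[Mr0 pr0] orr]] := proj_ex ipC ipL ipP m0 hN cN.
set r := m0 - r0 in orr.
have Mr : M r by apply: subsp_sub.
have phir : phi r = phi m0 by rewrite phiS // pr0 subr0.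
have qr : q r != 0.
  apply/eqP => q0; apply: nz; rewrite -phir.
  have := phiB r Mr; rewrite q0 mulr0 => h.
  by apply/eqP; rewrite -sqrf_eq0 eq_le h sqr_ge0.
exists ((phi r / q r) *: r); first exact: subsp_scale.
move=> m Mm.
have Nw : N (phi r *: m - phi m *: r).
  split; first by apply: subsp_sub => //; apply: subsp_scale.
  rewrite phiS ?phiZ //; [ring | exact: subsp_scale | exact: subsp_scale].
have := orr _ Nw.
rewrite (ipBr ipC ipL) !(ipZr ipC ipL) (ipC r m) => h.
apply/eqP; rewrite -subr_eq0; apply/eqP.
have -> : phi m - phi r / q r * ip m r = - (phi r * ip m r - phi m * q r) / q r by field.
by rewrite h oppr0 mul0r.
Qed.

Hypothesis ipD : forall x, ip x x = 0 -> x = 0.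

Lemma proj_unique (S : set V) x y y' : subsp S -> S y -> orth ip S (x - y) ->
  S y' -> orth ip S (x - y') -> y = y'.
Proof.
move=> hS Sy oy Sy' oy'.
have Sd : S (y - y') by apply: subsp_sub.
apply/eqP; rewrite -subr_eq0; apply/eqP; apply: ipD.
have e : y - y' = (x - y') - (x - y) by rewrite opprB [RHS]addrC addrA subrK.
by rewrite {1}e (ipBl ipL) oy' // oy // subrr.
Qed.

End More.

Section Alg.
Variable V : zmodType.
Lemma alg_dec (e a b : V) : e = a + (e - a - b) + b.
Proof. by rewrite addrA [a + (e - a)]addrC subrK subrK. Qed.
Lemma alg_zh (x xt a : V) : a + xt = x - ((x - xt) - a).
Proof. by rewrite opprB addrCA opprB [x + _]addrC subrK. Qed.
Lemma alg_w (k xt P v w : V) : k - xt + v + w = (k - P) + (P - xt + v + w).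
Proof. by rewrite !addrA subrK. Qed.
Lemma alg_sum (xt a b : V) : xt - (xt - a - b) = a + b.
Proof. by rewrite opprB opprB addrCA [xt + (a - xt)]addrCA subrr addr0 addrC. Qed.
Lemma alg_last (k xt p : V) : k - xt + (xt - p) = k - p.
Proof. by rewrite subrKA. Qed.
Lemma alg_inv (u p : V) : p = u - (u - p).
Proof. by rewrite opprB addrC subrK. Qed.
Lemma alg_tri (a b c : V) : a - c = (a - b) + (b - c).
Proof. by rewrite subrKA. Qed.
End Alg.

Lemma abs_small {R : realType} (r K : R) : 0 <= K -> (forall e, 0 < e -> `|r| <= e * K) -> r = 0.
Proof.
move=> K0 h; apply: (sq_small (K := K ^+ 2)); first exact: sqr_ge0.
move=> e e0.
have e1 : 0 < Order.min e 1 by rewrite lt_min e0 ltr01.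
have := h _ e1.
have m1 : Order.min e 1 <= e by rewrite ge_min lexx.
have m2 : Order.min e 1 <= 1 by rewrite ge_min lexx orbT.
have ha : 0 <= `|r| by [].
have -> : r ^+ 2 = `|r| ^+ 2 by rewrite real_normK // num_real.
move: m1 m2 e1; generalize (Order.min e 1) => f m1 m2 f0 hr.
have fK : 0 <= f * K by apply: mulr_ge0 => //; lra.
have : `|r| ^+ 2 <= (f * K) ^+ 2 by rewrite ler_pXn2r // nnegrE.
move=> h2; apply: le_trans h2 _.
rewrite exprMn; have : f ^+ 2 <= e by nra.
by move=> hf2; apply: ler_wpM2r => //; exact: sqr_ge0.
Qed.

Lemma closure_ballP {R : realType} (H : normedModType R) (A : set H) x :
  closure A x <-> forall e, 0 < e -> exists y, A y /\ `|x - y| < e.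
Proof.
split.
  move=> cl e e0; have [y [Ay By]] := cl _ (nbhsx_ballx x _ e0).
  by exists y; split => //; rewrite -ball_normE in By.
move=> h B /nbhs_ballP [e /= e0 hB].
have [y [Ay lt]] := h e e0; exists y; split => //; apply: hB.
by rewrite -ball_normE.
Qed.

Section Conc.
Variable R : realType.
Variable H : completeNormedModType R.
Variable ip : H -> H -> R.
Hypothesis hip : is_inner ip.

Lemma ipC_ : forall x y, ip x y = ip y x. Proof. by case: hip. Qed.
Lemma ipL_ : forall (a : R) x y z, ip (a *: x + y) z = a * ip x z + ip y z.
Proof. by case: hip => _ []. Qed.
Lemma ipN_ x : ip x x = `|x| ^+ 2. Proof. by case: hip => _ [] _ ->. Qed.
Lemma ipP_ x : 0 <= ip x x. Proof. by rewrite ipN_ sqr_ge0. Qed.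
Lemma ipD_ x : ip x x = 0 -> x = 0.
Proof. by rewrite ipN_ => /eqP; rewrite sqrf_eq0 normr_eq0 => /eqP. Qed.

Lemma cs_norm x y : `|ip x y| <= `|x| * `|y|.
Proof.
have := CS ipC_ ipL_ ipP_ x y; rewrite !ipN_ -exprMn.
have -> : ip x y ^+ 2 = `|ip x y| ^+ 2 by rewrite real_normK // num_real.
by rewrite ler_pXn2r // nnegrE // mulr_ge0.
Qed.

Lemma orth_closure (S : set H) x : orth ip S x -> orth ip (closure S) x.
Proof.
move=> ox z /closure_ballP cz.
apply: (abs_small (K := `|x|)) => // e e0.
have [y [Sy lt]] := cz e e0.
have -> : ip x z = ip x (z - y) by rewrite (ipBr ipC_ ipL_) (ox y Sy) subr0.
apply: le_trans (cs_norm _ _) _; rewrite mulrC; apply: ler_wpM2r => //; exact: ltW.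
Qed.

Lemma dense_zero (D : set H) v : closure D = setT -> (forall d, D d -> ip d v = 0) -> v = 0.
Proof.
move=> cD h; apply: ipD_.
have : orth ip D v by move=> z Dz; rewrite ipC_ h.
move/orth_closure; rewrite cD; apply.
done.
Qed.

Lemma complete_cvg (u : nat -> H) :
  (forall e, 0 < e -> exists N, forall n m, (N <= n)%N -> (N <= m)%N ->
      ip (u n - u m) (u n - u m) < e) ->
  exists l, u @ \oo --> l /\ forall e, 0 < e -> exists N, forall n, (N <= n)%N ->
      ip (u n - l) (u n - l) < e.
Proof.
move=> cau.
have cu : cauchy (u @ \oo).
  apply/cauchy_exP => e e0.
  have e2 : 0 < e ^+ 2 by rewrite exprn_gt0.
  have [N hN] := cau _ e2.
  exists (u N); exists N => // n hn /=.
  rewrite -ball_normE /=.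
  have := hN N n (leqnn N) hn; rewrite ipN_ ltr_pXn2r // nnegrE //; exact: ltW.
have cv : cvgn u by apply: cauchy_cvg.
exists (limn u); split; first exact: cv.
move=> e e0.
set d := e / (1 + e).
have d0 : 0 < d by apply: divr_gt0 => //; lra.
have dE : d * (1 + e) = e by rewrite /d mulfVK // gt_eqF //; lra.
have [N _ hN] := (cvgrPdist_lt _ _).1 cv d d0.
exists N => n hn; have := hN n hn; rewrite /= ipN_ distrC.
move: dE d0; generalize d => f fE f0 hf.
have hn0 : 0 <= `|u n - limn u| by [].
nra.
Qed.

Lemma complete_closed (S : set H) : closed S -> acomplete ip S.
Proof.
move=> cS u hu cau; have [l [cv hl]] := complete_cvg cau.
exists l => //; apply: (closed_cvg _ cS _ l cv).
by exists 0%N.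
Qed.

Lemma closure_subsp (S : set H) : subsp S -> subsp (closure S).
Proof.
case=> S0 SL; split; first exact: subset_closure.
move=> a x y /closure_ballP cx /closure_ballP cy; apply/closure_ballP => e e0.
have k0 : 0 < e / (2 * (`|a| + 1)) by apply: divr_gt0 => //; lra.
have [x' [Sx' hx]] := cx _ k0.
have e2 : 0 < e / 2 by apply: divr_gt0.
have [y' [Sy' hy]] := cy _ e2.
exists (a *: x' + y'); split; first exact: SL.
have -> : a *: x + y - (a *: x' + y') = a *: (x - x') + (y - y').
  by rewrite scalerBr opprD addrACA.
apply: le_lt_trans (ler_normD _ _) _; rewrite normrZ.
have a0 : 0 <= `|a| by [].
have : `|a| * `|x - x'| <= `|a| * (e / (2 * (`|a| + 1))) by apply: ler_wpM2l => //; exact: ltW.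
have : `|a| * (e / (2 * (`|a| + 1))) <= e / 2.
  rewrite mulrA ler_pdivrMr; last lra.
  have -> : e / 2 * (2 * (`|a| + 1)) = e * (`|a| + 1) by field.
  nra.
lra.
Qed.

End Conc.

Section Op.
Variable R : realType.
Variables H H' : completeNormedModType R.
Variable ip : H -> H -> R.
Variable ip' : H' -> H' -> R.
Hypothesis hip : is_inner ip.
Hypothesis hip' : is_inner ip'.
Variables (D : set H) (A : H -> H') (Ds : set H') (As : H' -> H).
Hypothesis hop : dd_closed_op D A.
Hypothesis had : is_adjoint ip ip' D A Ds As.

Let ipC := ipC_ hip. Let ipL := ipL_ hip. Let ipC' := ipC_ hip'. Let ipL' := ipL_ hip'.

Lemma sD : subsp D. Proof. by case: hop => -[]. Qed.
Lemma denseD : closure D = setT. Proof. by case: hop. Qed.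
Lemma closedG : closed [set p : H * H' | D p.1 /\ A p.1 = p.2]. Proof. by case: hop. Qed.
Lemma A_lin a x y : D x -> D y -> A (a *: x + y) = a *: A x + A y.
Proof. by case: hop => _ h _ _; apply: h. Qed.
Lemma A0 : A 0 = 0.
Proof. have [D0 _] := sD; have := A_lin 1 D0 D0; rewrite !scale1r !addr0 => h.
by apply: (addrI (A 0)); rewrite addr0 -h. Qed.
Lemma A_add x y : D x -> D y -> A (x + y) = A x + A y.
Proof. by move=> Dx Dy; have := A_lin 1 Dx Dy; rewrite !scale1r. Qed.
Lemma A_scale a x : D x -> A (a *: x) = a *: A x.
Proof. by move=> Dx; rewrite -[a *: x]addr0 A_lin ?A0 ?addr0 //; case: sD. Qed.
Lemma A_sub x y : D x -> D y -> A (x - y) = A x - A y.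
Proof. by move=> Dx Dy; have := A_lin (-1) Dy Dx; rewrite !scaleN1r [- y + x]addrC [- A y + A x]addrC. Qed.

Lemma adj_eq x y : D x -> Ds y -> ip' (A x) y = ip x (As y).
Proof. by case: had => _ h; apply: h. Qed.
Lemma Ds_iff y : Ds y <-> exists z : H, forall x, D x -> ip' (A x) y = ip x z.
Proof. by case: had. Qed.

Lemma Ds_subsp : subsp Ds.
Proof.
split.
  by apply/Ds_iff; exists 0 => x Dx; rewrite (ipC' (A x)) (ip0l ipL') ipC (ip0l ipL).
move=> a y y' Dy Dy'; apply/Ds_iff; exists (a *: As y + As y') => x Dx.
by rewrite ipC' ipL' !(ipC' _ (A x)) !adj_eq // (ipDr ipC ipL) (ipZr ipC ipL).
Qed.

Lemma As_lin a y y' : Ds y -> Ds y' -> As (a *: y + y') = a *: As y + As y'.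
Proof.
move=> Dy Dy'; apply/eqP; rewrite -subr_eq0; apply/eqP.
apply: (dense_zero hip denseD) => x Dx.
rewrite (ipBr ipC ipL) -adj_eq //; last by case: Ds_subsp => _; apply.
rewrite (ipDr ipC ipL) (ipZr ipC ipL) -!adj_eq // ipC' ipL' !(ipC' y) !(ipC' y').
by rewrite subrr.
Qed.
Lemma As_sub y y' : Ds y -> Ds y' -> As (y - y') = As y - As y'.
Proof.
by move=> Dy Dy'; have := As_lin (-1) Dy' Dy; rewrite !scaleN1r [- y' + y]addrC [- As y' + As y]addrC.
Qed.
Lemma As0 : As 0 = 0.
Proof. have [D0 _] := Ds_subsp; by rewrite -(subrr 0) As_sub // subrr. Qed.

Lemma kernAs_orth y : (Ds y /\ As y = 0) <-> orth ip' (A @` D) y.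
Proof.
split.
  by move=> [Dy Ay] _ [x Dx <-]; rewrite ipC' adj_eq // Ay ipC (ip0l ipL).
move=> oy.
have Dy : Ds y.
  apply/Ds_iff; exists 0 => x Dx; rewrite ipC' oy; last by exists x.
  by rewrite ipC (ip0l ipL).
split => //; apply: (dense_zero hip denseD) => x Dx.
by rewrite -adj_eq // ipC' oy //; exists x.
Qed.

Lemma kern_orth y : D y /\ A y = 0 -> orth ip (As @` Ds) y.
Proof.
by move=> [Dy Ay] _ [p Dp <-]; rewrite -adj_eq // Ay ipC' (ip0r ipC' ipL').
Qed.

Lemma rangeA_subsp : subsp (A @` D).
Proof.
have [D0 DL] := sD; split; first by exists 0 => //; exact: A0.
move=> a _ _ [x Dx <-] [y Dy <-]; exists (a *: x + y); first exact: DL.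
exact: A_lin.
Qed.

Lemma rangeAs_subsp : subsp (As @` Ds).
Proof.
have [D0 DL] := Ds_subsp; split; first by exists 0 => //; exact: As0.
move=> a _ _ [x Dx <-] [y Dy <-]; exists (a *: x + y); first exact: DL.
exact: As_lin.
Qed.

End Op.

Section Op2.
Variable R : realType.
Variables H H' : completeNormedModType R.
Variable ip : H -> H -> R.
Variable ip' : H' -> H' -> R.
Hypothesis hip : is_inner ip.
Hypothesis hip' : is_inner ip'.
Variables (D : set H) (A : H -> H') (Ds : set H') (As : H' -> H).
Hypothesis hop : dd_closed_op D A.
Hypothesis had : is_adjoint ip ip' D A Ds As.

Let ipC := ipC_ hip. Let ipL := ipL_ hip. Let ipC' := ipC_ hip'. Let ipL' := ipL_ hip'.

Definition ipG (p p' : (H * H')%type) : R := ip p.1 p'.1 + ip' p.2 p'.2.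

Lemma ipG_C p p' : ipG p p' = ipG p' p.
Proof. by rewrite /ipG ipC ipC'. Qed.
Lemma ipG_L (a : R) p p' p'' : ipG (a *: p + p') p'' = a * ipG p p'' + ipG p' p''.
Proof. rewrite /ipG /= ipL ipL'; ring. Qed.
Lemma ipG_P p : 0 <= ipG p p.
Proof. by rewrite /ipG; apply: addr_ge0; apply: ipP_. Qed.

Let G := [set p : H * H' | D p.1 /\ A p.1 = p.2].

Lemma G_subsp : subsp G.
Proof.
have [D0 DL] := sD hop; split; first by split => //; exact: A0 hop.
move=> a p p' [Dp Ap] [Dp' Ap']; split => /=; first exact: DL.
by rewrite (A_lin hop) // Ap Ap'.
Qed.

Lemma G_complete : acomplete ipG G.
Proof.
move=> u hu cau.
have cau1 : forall e, 0 < e -> exists N, forall n m, (N <= n)%N -> (N <= m)%N ->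
    ip ((u n).1 - (u m).1) ((u n).1 - (u m).1) < e.
  move=> e e0; have [N hN] := cau e e0; exists N => n m hn hm.
  have := hN n m hn hm; rewrite /ipG /=; have := ipP_ hip' ((u n).2 - (u m).2); lra.
have cau2 : forall e, 0 < e -> exists N, forall n m, (N <= n)%N -> (N <= m)%N ->
    ip' ((u n).2 - (u m).2) ((u n).2 - (u m).2) < e.
  move=> e e0; have [N hN] := cau e e0; exists N => n m hn hm.
  have := hN n m hn hm; rewrite /ipG /=; have := ipP_ hip ((u n).1 - (u m).1); lra.
have [l1 [cv1 h1]] := complete_cvg hip cau1.
have [l2 [cv2 h2]] := complete_cvg hip' cau2.
exists (l1, l2).
  have cvp : (fun n => ((u n).1, (u n).2)) @ \oo --> (l1, l2) by exact: cvg_pair.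
  have := @closed_cvg _ _ \oo _ (fun n => ((u n).1, (u n).2)) _ (closedG hop).
  apply => //.
  by exists 0%N => // n _; have [] := hu n; case: (u n).
move=> e e0; have e2 : 0 < e / 2 by apply: divr_gt0.
have [N1 hN1] := h1 _ e2; have [N2 hN2] := h2 _ e2.
exists (maxn N1 N2) => n hn.
have := hN1 n (leq_trans (leq_maxl _ _) hn); have := hN2 n (leq_trans (leq_maxr _ _) hn).
rewrite /ipG /=; lra.
Qed.

Lemma orth_rangeAs_kern y : orth ip (As @` Ds) y -> D y /\ A y = 0.
Proof.
move=> oy.
have [[w Aw] [[Dw /= <-] ow]] := proj_ex ipG_C ipG_L ipG_P (y, 0) G_subsp G_complete.
have key : forall u, D u -> ip' (A u) (A w) = ip u (y - w).
  move=> u Du; have := ow (u, A u) (conj Du erefl).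
  rewrite /ipG /= sub0r (ipC_ hip' (- A w)) (ipNr ipC' ipL') (ipC (y - w)) => h.
  lra.
have DAw : Ds (A w) by apply/(Ds_iff had); exists (y - w).
have AsAw : As (A w) = y - w.
  apply/eqP; rewrite -subr_eq0; apply/eqP; apply: (dense_zero hip (denseD hop)) => u Du.
  by rewrite (ipBr ipC ipL) -(adj_eq had) // key // subrr.
have h1 : ip y (y - w) = 0 by rewrite -AsAw; apply: oy; exists (A w).
have h2 : ip w (y - w) = ip' (A w) (A w) by rewrite -AsAw (adj_eq had).
have h3 : ip (y - w) (y - w) = - ip' (A w) (A w) by rewrite (ipBl ipL) h1 h2 sub0r.
have p1 := ipP_ hip (y - w); have p2 := ipP_ hip' (A w).
have e1 : ip (y - w) (y - w) = 0 by lra.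
have e2 : ip' (A w) (A w) = 0 by lra.
have := ipD_ hip e1; move/eqP; rewrite subr_eq0 => /eqP ->.
by split => //; apply: (ipD_ hip' e2).
Qed.

Lemma reduce w : D w -> exists w0, [/\ D w0, closure (As @` Ds) w0, A w0 = A w &
   D (w - w0) /\ A (w - w0) = 0].
Proof.
move=> Dw.
have sC := closure_subsp (rangeAs_subsp hip hip' hop had).
have cC := complete_closed hip (@closed_closure _ (As @` Ds)).
have [w0 [Cw0 ow0]] := proj_ex ipC ipL (ipP_ hip) w sC cC.
have hk : D (w - w0) /\ A (w - w0) = 0.
  apply: orth_rangeAs_kern => z Rz; apply: ow0; exact: subset_closure.
have Dw0 : D w0.
  have -> : w0 = w - (w - w0) by rewrite opprB addrC subrK.
  apply: subsp_sub; [exact: (sD hop) | exact: Dw | exact: hk.1].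
exists w0; split => //.
have := hk.2; rewrite (A_sub hop) // => /eqP; rewrite subr_eq0 => /eqP ->.
done.
Qed.

End Op2.

Section Op3.
Variable R : realType.
Variables H H' : completeNormedModType R.
Variable ip : H -> H -> R.
Variable ip' : H' -> H' -> R.
Hypothesis hip : is_inner ip.
Hypothesis hip' : is_inner ip'.
Variables (D : set H) (A : H -> H') (Ds : set H') (As : H' -> H).
Hypothesis hop : dd_closed_op D A.
Hypothesis had : is_adjoint ip ip' D A Ds As.

Let ipC := ipC_ hip. Let ipL := ipL_ hip. Let ipC' := ipC_ hip'. Let ipL' := ipL_ hip'.

Lemma poinc_adj c : best_const D (closure (As @` Ds)) A c ->
  forall y, Ds y -> (A @` D) y -> `|y| <= c * `|As y|.
Proof.
move=> [c0 [hc _]] y Dy [w Dw Ay].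
have [w0 [Dw0 Cw0 Aw0 _]] := reduce hip hip' hop had Dw.
rewrite -Ay -Aw0 in Dy *.
have h1 : `|A w0| ^+ 2 = ip w0 (As (A w0)) by rewrite -(ipN_ hip') (adj_eq had).
have h2 := cs_norm hip w0 (As (A w0)).
have h3 := hc w0 Dw0 Cw0.
have h4 := ler_norm (ip w0 (As (A w0))).
have a0 : 0 <= `|A w0| by []. have b0 : 0 <= `|As (A w0)| by [].
have n0 : 0 <= `|w0| by [].
have h5 : `|w0| * `|As (A w0)| <= c * `|A w0| * `|As (A w0)| by apply: ler_wpM2r.
have h6 : `|A w0| * `|A w0| <= (c * `|As (A w0)|) * `|A w0|.
  rewrite -expr2 mulrAC; lra.
have [->|anz] := eqVneq `|A w0| 0; first by rewrite mulr_ge0 //; exact: ltW.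
have ap : 0 < `|A w0| by rewrite lt0r anz.
by rewrite ler_pM2r in h6.
Qed.

Lemma rangeAs_orth c : closed (A @` D) -> best_const D (closure (As @` Ds)) A c ->
  forall z, orth ip (kern D A) z -> (As @` Ds) z.
Proof.
move=> cR [c0 [hc _]] z oz.
pose phi := fun m : H' => ip (xget 0 [set w | D w /\ A w = m]) z.
have phiA : forall w, D w -> phi (A w) = ip w z.
  move=> w Dw; rewrite /phi.
  have ex : exists x, [set w0 | D w0 /\ A w0 = A w] x by exists w.
  have := xgetPex 0 ex.
  set w' := xget _ _; move=> [Dw' Aw'].
  have kk : kern D A (w' - w).
    split; first by apply: subsp_sub => //; exact: (sD hop).
    by rewrite (A_sub hop) // Aw' subrr.
  have := oz _ kk; rewrite (ipBr ipC ipL) => /eqP; rewrite subr_eq0 => /eqP.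
  by rewrite ipC => ->; rewrite ipC.
have hM := rangeA_subsp hop.
have cM := complete_closed hip' cR.
have phiL : forall a m m', (A @` D) m -> (A @` D) m' -> phi (a *: m + m') = a * phi m + phi m'.
  move=> a _ _ [w Dw <-] [w' Dw' <-].
  have [_ DL] := sD hop.
  rewrite -(A_lin hop) // phiA ?phiA ?ipL //; exact: DL.
have phiB : forall m, (A @` D) m -> phi m ^+ 2 <= (c ^+ 2 * `|z| ^+ 2) * ip' m m.
  move=> _ [w Dw <-].
  have [w0 [Dw0 Cw0 Aw0 kk]] := reduce hip hip' hop had Dw.
  rewrite phiA // (ipN_ hip') -Aw0.
  have -> : ip w z = ip w0 z.
    have := oz _ kk; rewrite (ipBr ipC ipL) => /eqP; rewrite subr_eq0 => /eqP.
    by rewrite ipC => ->; rewrite ipC.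
  have h2 := cs_norm hip w0 z.
  have h3 := hc w0 Dw0 Cw0.
  have -> : ip w0 z ^+ 2 = `|ip w0 z| ^+ 2 by rewrite real_normK // num_real.
  have z0 : 0 <= `|z| by [].
  have h4 : `|w0| * `|z| <= c * `|A w0| * `|z| by apply: ler_wpM2r.
  have : `|ip w0 z| <= c * `|A w0| * `|z| by apply: le_trans h4.
  move=> h5; have : `|ip w0 z| ^+ 2 <= (c * `|A w0| * `|z|) ^+ 2.
    by rewrite ler_pXn2r // nnegrE // !mulr_ge0 //; exact: ltW.
  move=> h6; apply: le_trans h6 _; rewrite le_eqVlt; apply/orP; left; apply/eqP; ring.
have C0 : 0 <= c ^+ 2 * `|z| ^+ 2 by apply: mulr_ge0; apply: sqr_ge0.
have [y My hy] := riesz ipC' ipL' (ipP_ hip') hM cM C0 phiL phiB.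
have Dy : Ds y.
  apply/(Ds_iff had); exists z => x Dx.
  by rewrite -phiA // hy //; exists x.
exists y => //.
apply/eqP; rewrite -subr_eq0; apply/eqP; apply: (dense_zero hip (denseD hop)) => x Dx.
by rewrite (ipBr ipC ipL) -(adj_eq had) // -hy ?phiA ?subrr //; exists x.
Qed.

Lemma rangeAs_eq c : closed (A @` D) -> best_const D (closure (As @` Ds)) A c ->
  As @` Ds = orth ip (kern D A).
Proof.
move=> cR bc; apply/seteqP; split => z.
  move=> Rz k [Dk Ak]; rewrite ipC; apply: (kern_orth hip' had) => //.
by move=> oz; apply: (rangeAs_orth cR bc).
Qed.

Lemma rangeAs_complete c : closed (A @` D) -> best_const D (closure (As @` Ds)) A c ->
  acomplete ip (As @` Ds).
Proof.
move=> cR bc; rewrite (rangeAs_eq cR bc).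
apply: orth_complete; [exact: ipC | exact: ipL | exact: (ipP_ hip) |].
by apply: complete_closed => //; exact: closedT.
Qed.

End Op3.

Section Proj2.
Variable R : realType.
Variable H : completeNormedModType R.
Variable ip : H -> H -> R.
Hypothesis hip : is_inner ip.
Let ipC := ipC_ hip. Let ipL := ipL_ hip. Let ipP := ipP_ hip. Let ipD := ipD_ hip.

Lemma oproj_spec (S : set H) v : subsp S -> acomplete ip S ->
  S (oproj ip S v) /\ orth ip S (v - oproj ip S v).
Proof. move=> sS cS; exact: (xgetPex 0 (proj_ex ipC ipL ipP v sS cS)). Qed.

Lemma oproj_eq (S : set H) v y : subsp S -> S y -> orth ip S (v - y) -> oproj ip S v = y.
Proof.
move=> sS Sy oy; rewrite /oproj; apply: xget_unique; first by split.
move=> y' [Sy' oy']; exact: (proj_unique ipL ipD sS Sy' oy' Sy oy).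
Qed.

Lemma oproj_sub (S : set H) u v : subsp S -> acomplete ip S ->
  oproj ip S (u - v) = oproj ip S u - oproj ip S v.
Proof.
move=> sS cS; have [Su ou] := oproj_spec u sS cS; have [Sv ov] := oproj_spec v sS cS.
apply: oproj_eq => //; first exact: subsp_sub.
have -> : u - v - (oproj ip S u - oproj ip S v) = (u - oproj ip S u) - (v - oproj ip S v).
  by rewrite opprB [in RHS]opprB addrACA [in RHS]addrACA [- oproj ip S u + _]addrC.
by move=> z Sz; rewrite (ipBl ipL) ou // ov // subrr.
Qed.

Lemma pythag a b : ip a b = 0 -> `|a + b| ^+ 2 = `|a| ^+ 2 + `|b| ^+ 2.
Proof. by move=> h; rewrite -!(ipN_ hip) (qD ipC ipL) h mulr0 addr0. Qed.

Lemma oproj_contr (S : set H) v : subsp S -> acomplete ip S -> `|oproj ip S v| <= `|v|.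
Proof.
move=> sS cS; have [Sp op] := oproj_spec v sS cS.
have e : v = oproj ip S v + (v - oproj ip S v) by rewrite addrC subrK.
have h : ip (oproj ip S v) (v - oproj ip S v) = 0 by rewrite ipC; apply: op.
have := pythag h; rewrite -e => h2.
rewrite -(ler_pXn2r (n := 2)) // ?nnegrE // h2 lerDl; exact: sqr_ge0.
Qed.

Lemma orth_sym (S : set H) x z : orth ip S x -> S z -> ip z x = 0.
Proof. by move=> ox Sz; rewrite ipC; apply: ox. Qed.

End Proj2.

Unset Implicit Arguments. Set Strict Implicit.

Theorem theorem4p1 (R : realType)
  (H0 H1 H2 H3 H4 : completeNormedModType R)
  (ip0 : H0 -> H0 -> R) (ip1 : H1 -> H1 -> R) (ip2 : H2 -> H2 -> R)
  (ip3 : H3 -> H3 -> R) (ip4 : H4 -> H4 -> R)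
  (D0 : set H0) (A0 : H0 -> H1) (D0s : set H1) (A0s : H1 -> H0)
  (D1 : set H1) (A1 : H1 -> H2) (D1s : set H2) (A1s : H2 -> H1)
  (D2 : set H2) (A2 : H2 -> H3) (D2s : set H3) (A2s : H3 -> H2)
  (D3 : set H3) (A3 : H3 -> H4) (D3s : set H4) (A3s : H4 -> H3)
  (c1 c2 : R)
  (f : H3) (g : H1) (k : H2) (x xt : H2) :
  is_inner ip0 -> is_inner ip1 -> is_inner ip2 -> is_inner ip3 -> is_inner ip4 ->
  dd_closed_op D0 A0 -> dd_closed_op D1 A1 -> dd_closed_op D2 A2 -> dd_closed_op D3 A3 ->
  is_adjoint ip0 ip1 D0 A0 D0s A0s -> is_adjoint ip1 ip2 D1 A1 D1s A1s ->
  is_adjoint ip2 ip3 D2 A2 D2s A2s -> is_adjoint ip3 ip4 D3 A3 D3s A3s ->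
  A0 @` D0 `<=` kern D1 A1 -> A1 @` D1 `<=` kern D2 A2 -> A2 @` D2 `<=` kern D3 A3 ->
  closed (A1 @` D1) -> closed (A2 @` D2) ->
  finite_dim (kern D2 A2 `&` kern D1s A1s) ->
  best_const D1 (closure (A1s @` D1s)) A1 c1 ->
  best_const D2 (closure (A2s @` D2s)) A2 c2 ->
  (A2 @` D2) f -> (A1s @` D1s) g -> (kern D2 A2 `&` kern D1s A1s) k ->
  D2 x -> D1s x -> A2 x = f -> A1s x = g ->
  oproj ip2 (kern D2 A2 `&` kern D1s A1s) x = k ->
  let K2 := kern D2 A2 `&` kern D1s A1s in
  let piA1 := oproj ip2 (A1 @` D1) in
  let piA2s := oproj ip2 (A2s @` D2s) in
  let pi2 := oproj ip2 K2 in
  let xf := rinv D2 (closure (A2s @` D2s)) A2 f in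
  let xg := rinv D1s (closure (A1 @` D1)) A1s g in
  let e := x - xt in
  let eA1 := piA1 e in
  let eA2s := piA2s e in
  let eK2 := pi2 e in
  (* (i) *)
  (e = eA1 + eK2 + eA2s /\ (A1 @` D1) eA1 /\ K2 eK2 /\ (A2s @` D2s) eA2s /\
   `|e| ^+ 2 = `|eA1| ^+ 2 + `|eK2| ^+ 2 + `|eA2s| ^+ 2) /\
  (* (ii) *)
  (let zh := eA1 + xt in
   eA1 = xg - piA1 xt /\
   (forall z, D1s z -> `|eA1| <= c1 * `|A1s z - g| + `|z - xt|) /\
   zh = x - (e - piA1 e) /\ D1s zh /\ A1s zh = g /\
   c1 * `|A1s zh - g| + `|zh - xt| = `|eA1|) /\
  (* (iii) *)
  (let xh := eA2s + xt in
   eA2s = xf - piA2s xt /\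
   (forall xi, D2 xi -> `|eA2s| <= c2 * `|A2 xi - f| + `|xi - xt|) /\
   xh = x - (e - piA2s e) /\ D2 xh /\ A2 xh = f /\
   c2 * `|A2 xh - f| + `|xh - xt| = `|eA2s|) /\
  (* (iv) *)
  (let vh := rinv D1 (closure (A1s @` D1s)) A1 (piA1 xt) in
   let ph := rinv D2s (closure (A2 @` D2)) A2s (piA2s xt) in
   eK2 = k - pi2 xt /\
   (forall v p, D1 v -> D2s p -> `|eK2| <= `|k - xt + A1 v + A2s p|) /\
   (D1 vh /\ closure (A1s @` D1s) vh) /\ (D2s ph /\ closure (A2 @` D2) ph) /\
   A1 vh + A2s ph = xt - pi2 xt /\
   `|k - xt + A1 vh + A2s ph| = `|eK2|).
Proof.
move=> hi0 hi1 hi2 hi3 hi4 hop0 hop1 hop2 hop3 had0 had1 had2 had3 inc0 inc1 inc2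
  cR1 cR2 fd bc1 bc2 hf hg hk Dx2 Dx1s Ax Asx pik K2 piA1 piA2s pi2 xf xg e eA1 eA2s eK2.
pose S1 := A1 @` D1. pose S3 := A2s @` D2s.
have ipC2 := ipC_ hi2. have ipL2 := ipL_ hi2. have ipP2 := ipP_ hi2.
have sS1 : subsp S1 := rangeA_subsp hop1.
have cS1 : acomplete ip2 S1 := complete_closed hi2 cR1.
have sS3 : subsp S3 := rangeAs_subsp hi2 hi3 hop2 had2.
have cS3 : acomplete ip2 S3 := rangeAs_complete hi2 hi3 hop2 had2 cR2 bc2.
have kerA1s : forall y, (D1s y /\ A1s y = 0) <-> orth ip2 S1 y := kernAs_orth hi1 hi2 hop1 had1.
have kerA2 : forall y, (D2 y /\ A2 y = 0) <-> orth ip2 S3 y.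
  by move=> y; split; [apply: (kern_orth hi3 had2) | apply: (orth_rangeAs_kern hi2 hi3 hop2 had2)].
have K2E : K2 = orth ip2 (S1 `|` S3).
  rewrite /K2; apply/seteqP; split => y.
    move=> [k2 k1] z [S1z|S3z]; [exact: ((kerA1s y).1 k1) | exact: ((kerA2 y).1 k2)].
  move=> oy; split; [apply/kerA2 => z S3z; apply: oy; right | apply/kerA1s => z S1z; apply: oy; left] => //.
have sK2 : subsp K2 by rewrite K2E; apply: orth_subsp.
have cK2 : acomplete ip2 K2.
  rewrite K2E; apply: orth_complete => //; apply: complete_closed => //; exact: closedT.
have K2o1 : forall y, K2 y -> orth ip2 S1 y by move=> y; rewrite K2E => oy z S1z; apply: oy; left.
have K2o3 : forall y, K2 y -> orth ip2 S3 y by move=> y; rewrite K2E => oy z S3z; apply: oy; right.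
have toK2 : forall y, orth ip2 S1 y -> orth ip2 S3 y -> K2 y.
  by move=> y o1 o3; split; [apply/kerA2 | apply/kerA1s].
have S1o3 : forall y, S1 y -> orth ip2 S3 y by move=> y /inc1 /kerA2.
have S3o1 : forall y, S3 y -> orth ip2 S1 y.
  by move=> y S3y z S1z; rewrite ipC2; apply: S1o3.
have sp1 : forall v, S1 (piA1 v) /\ orth ip2 S1 (v - piA1 v) := fun v => oproj_spec hi2 v sS1 cS1.
have sp3 : forall v, S3 (piA2s v) /\ orth ip2 S3 (v - piA2s v) := fun v => oproj_spec hi2 v sS3 cS3.
have spK : forall v, K2 (pi2 v) /\ orth ip2 K2 (v - pi2 v) := fun v => oproj_spec hi2 v sK2 cK2.
have dec : forall v, pi2 v = v - piA1 v - piA2s v.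
  move=> v; apply: (oproj_eq hi2 sK2).
    apply: toK2 => z Sz.
      rewrite !(ipBl ipL2) -(ipBl ipL2) ((sp1 v).2 z Sz) ((S3o1 _ (sp3 v).1) z Sz); lra.
    have := (sp3 v).2 z Sz; rewrite !(ipBl ipL2) ((S1o3 _ (sp1 v).1) z Sz); lra.
  move=> z Kz; rewrite !(ipBl ipL2).
  have := K2o1 z Kz _ (sp1 v).1; have := K2o3 z Kz _ (sp3 v).1; rewrite (ipC2 z) (ipC2 z); lra.
have eK2E : eK2 = e - eA1 - eA2s by rewrite /eK2 dec.
have eE : e = eA1 + eK2 + eA2s by rewrite eK2E -alg_dec.
split.
  split; first exact: eE.
  split; first exact: (sp1 e).1.
  split; first exact: (spK e).1.
  split; first exact: (sp3 e).1.
  have o12 : ip2 eA1 eK2 = 0 by rewrite ipC2; apply: K2o1 _ (spK e).1 _ (sp1 e).1.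
  have o13 : ip2 eA1 eA2s = 0 by apply: S1o3 (sp1 e).1 _ (sp3 e).1.
  have o23 : ip2 eK2 eA2s = 0 by apply: K2o3 _ (spK e).1 _ (sp3 e).1.
  have o : ip2 (eA1 + eK2) eA2s = 0 by rewrite (ipDl ipL2) o13 o23 addr0.
  by rewrite {1}eE (pythag hi2 o) (pythag hi2 o12).
split.
  move=> zh.
  have P1D : forall u, D1s u -> D1s (piA1 u) /\ A1s (piA1 u) = A1s u.
    move=> u Du; have [Dk Ak] := (kerA1s _).2 (sp1 u).2.
    rewrite [piA1 u](alg_inv u); split.
      exact: (subsp_sub (Ds_subsp hi1 hi2 had1) Du Dk).
    by rewrite (As_sub hi1 hi2 hop1 had1) // Ak subr0.
  have xgE : xg = piA1 x.
    rewrite /xg /rinv; apply: xget_unique.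
      split; first exact: (P1D x Dx1s).1.
      by split; [apply: subset_closure; exact: (sp1 x).1 | rewrite (P1D x Dx1s).2].
    move=> w [Dw [Cw Aw]].
    move: Cw; rewrite -(proj1 (closure_id _) cR1) => Cw.
    have Sd : S1 (w - piA1 x) by apply: subsp_sub => //; exact: (sp1 x).1.
    have kd : D1s (w - piA1 x) /\ A1s (w - piA1 x) = 0.
      split; first exact: (subsp_sub (Ds_subsp hi1 hi2 had1) Dw (P1D x Dx1s).1).
      rewrite (As_sub hi1 hi2 hop1 had1) //; last exact: (P1D x Dx1s).1. by rewrite (P1D x Dx1s).2 Aw Asx subrr.
    have := (kerA1s _).1 kd _ Sd; move/(ipD_ hi2)/eqP; rewrite subr_eq0 => /eqP.
    done.
  have eA1E : eA1 = piA1 x - piA1 xt by exact: (oproj_sub hi2 x xt sS1 cS1).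
  split; first by rewrite xgE.
  split.
    move=> z Dz.
    have [Dpz Apz] := P1D z Dz.
    have Sd : S1 (piA1 x - piA1 z) by apply: subsp_sub => //; [exact: (sp1 x).1 | exact: (sp1 z).1].
    have Dd : D1s (piA1 x - piA1 z) by exact: (subsp_sub (Ds_subsp hi1 hi2 had1) (P1D x Dx1s).1 Dpz).
    have Ad : A1s (piA1 x - piA1 z) = g - A1s z.
      rewrite (As_sub hi1 hi2 hop1 had1) //; last exact: (P1D x Dx1s).1.
      by rewrite (P1D x Dx1s).2 Apz Asx.
    have pc := poinc_adj hi1 hi2 hop1 had1 bc1 Dd Sd.
    rewrite Ad [`|g - _|]distrC in pc.
    have ct : `|piA1 z - piA1 xt| <= `|z - xt|.
      by rewrite -(oproj_sub hi2 z xt sS1 cS1); apply: (oproj_contr hi2).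
    rewrite eA1E (alg_tri _ (piA1 z)).
    apply: le_trans (ler_normD _ _) _; exact: (lerD pc ct).
  have kE : D1s (e - piA1 e) /\ A1s (e - piA1 e) = 0 := (kerA1s _).2 (sp1 e).2.
  have zhE : zh = x - (e - piA1 e) by rewrite /zh /eA1 /e; exact: alg_zh.
  have Dzh : D1s zh by rewrite zhE; exact: (subsp_sub (Ds_subsp hi1 hi2 had1) Dx1s kE.1).
  have Azh : A1s zh = g.
    rewrite zhE (As_sub hi1 hi2 hop1 had1) //; last exact: kE.1.
    by rewrite kE.2 subr0.
  split; first exact: zhE.
  split; first exact: Dzh.
  split; first exact: Azh.
  by rewrite Azh subrr normr0 mulr0 add0r /zh addrK.
split.
  move=> xh.
  have P3D : forall u, D2 u -> D2 (piA2s u) /\ A2 (piA2s u) = A2 u.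
    move=> u Du; have [Dk Ak] := (kerA2 _).2 (sp3 u).2.
    rewrite [piA2s u](alg_inv u); split.
      exact: (subsp_sub (sD hop2) Du Dk).
    by rewrite (A_sub hop2) // Ak subr0.
  have sC3 := closure_subsp (rangeAs_subsp hi2 hi3 hop2 had2).
  have xfE : xf = piA2s x.
    rewrite /xf /rinv; apply: xget_unique.
      split; first exact: (P3D x Dx2).1.
      by split; [apply: subset_closure; exact: (sp3 x).1 | rewrite (P3D x Dx2).2].
    move=> w [Dw [Cw Aw]].
    have Cd : closure S3 (w - piA2s x).
      apply: (subsp_sub sC3 Cw); apply: subset_closure; exact: (sp3 x).1.
    have kd : D2 (w - piA2s x) /\ A2 (w - piA2s x) = 0.
      split; first exact: (subsp_sub (sD hop2) Dw (P3D x Dx2).1).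
      rewrite (A_sub hop2) //; last exact: (P3D x Dx2).1.
      by rewrite (P3D x Dx2).2 Aw Ax subrr.
    have := orth_closure hi2 ((kerA2 _).1 kd) Cd.
    move/(ipD_ hi2)/eqP; rewrite subr_eq0 => /eqP.
    done.
  have eA2sE : eA2s = piA2s x - piA2s xt by exact: (oproj_sub hi2 x xt sS3 cS3).
  split; first by rewrite xfE.
  split.
    move=> z Dz.
    have [Dpz Apz] := P3D z Dz.
    have Sd : S3 (piA2s x - piA2s z) by apply: subsp_sub => //; [exact: (sp3 x).1 | exact: (sp3 z).1].
    have Dd : D2 (piA2s x - piA2s z) by exact: (subsp_sub (sD hop2) (P3D x Dx2).1 Dpz).
    have Ad : A2 (piA2s x - piA2s z) = f - A2 z.
      rewrite (A_sub hop2) //; last exact: (P3D x Dx2).1.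
      by rewrite (P3D x Dx2).2 Apz Ax.
    have pc := bc2.2.1 _ Dd (subset_closure Sd).
    rewrite Ad [`|f - _|]distrC in pc.
    have ct : `|piA2s z - piA2s xt| <= `|z - xt|.
      by rewrite -(oproj_sub hi2 z xt sS3 cS3); apply: (oproj_contr hi2).
    rewrite eA2sE (alg_tri _ (piA2s z)).
    apply: le_trans (ler_normD _ _) _; exact: (lerD pc ct).
  have kE : D2 (e - piA2s e) /\ A2 (e - piA2s e) = 0 := (kerA2 _).2 (sp3 e).2.
  have xhE : xh = x - (e - piA2s e) by rewrite /xh /eA2s /e; exact: alg_zh.
  have Dxh : D2 xh by rewrite xhE; exact: (subsp_sub (sD hop2) Dx2 kE.1).
  have Axh : A2 xh = f.
    rewrite xhE (A_sub hop2) //; last exact: kE.1.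
    by rewrite kE.2 subr0.
  split; first exact: xhE.
  split; first exact: Dxh.
  split; first exact: Axh.
  by rewrite Axh subrr normr0 mulr0 add0r /xh addrK.
move=> vh ph.
have eK2E' : eK2 = k - pi2 xt by rewrite -pik; exact: (oproj_sub hi2 x xt sK2 cK2).
have Ka : K2 (k - pi2 xt) := subsp_sub sK2 hk (spK xt).1.
split; first exact: eK2E'.
split.
  move=> v p Dv Dp.
  set r := pi2 xt - xt + A1 v + A2s p.
  have wE : k - xt + A1 v + A2s p = (k - pi2 xt) + r by rewrite /r; exact: alg_w.
  have orr : forall kk, K2 kk -> ip2 r kk = 0.
    move=> kk Kk; rewrite /r !(ipDl ipL2) (ipNl ipL2).
    have h1 := (spK xt).2 kk Kk; rewrite (ipBl ipL2) in h1.
    have h2 : ip2 (A1 v) kk = 0 by rewrite ipC2; apply: K2o1 _ Kk _ _; exists v.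
    have h3 : ip2 (A2s p) kk = 0 by rewrite ipC2; apply: K2o3 _ Kk _ _; exists p.
    rewrite h2 h3; lra.
  have o : ip2 (k - pi2 xt) r = 0 by rewrite ipC2; apply: orr.
  rewrite wE eK2E'.
  rewrite -(ler_pXn2r (n := 2)) ?nnegrE // (pythag hi2 o) lerDl; exact: sqr_ge0.
have exv : exists y, [set y | D1 y /\ closure (A1s @` D1s) y /\ A1 y = piA1 xt] y.
  have [w Dw Aw] := (sp1 xt).1.
  have [w0 [Dw0 Cw0 Aw0 _]] := reduce hi1 hi2 hop1 had1 Dw.
  by exists w0; split => //; split => //; rewrite Aw0.
have hv : D1 vh /\ closure (A1s @` D1s) vh /\ A1 vh = piA1 xt := xgetPex 0 exv.
have exp : exists y, [set y | D2s y /\ closure (A2 @` D2) y /\ A2s y = piA2s xt] y.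
  have [p Dp Ap] := (sp3 xt).1.
  have sR2 := rangeA_subsp hop2. have cR2' := complete_closed hi3 cR2.
  have [Sq oq] := oproj_spec hi3 p sR2 cR2'.
  move: Sq oq; set q := oproj ip3 _ p => Sq oq.
  have [Dk Ak] := (kernAs_orth hi2 hi3 hop2 had2 _).2 oq.
  have Dq : D2s q by rewrite (alg_inv p q); exact: (subsp_sub (Ds_subsp hi2 hi3 had2) Dp Dk).
  exists q; split => //.
  split; first exact: subset_closure.
  rewrite (alg_inv p q) (As_sub hi2 hi3 hop2 had2) //.
  by rewrite Ak subr0.
have hp : D2s ph /\ closure (A2 @` D2) ph /\ A2s ph = piA2s xt := xgetPex 0 exp.
have sumE : A1 vh + A2s ph = xt - pi2 xt by rewrite hv.2.2 hp.2.2 dec alg_sum.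
split; first by split; [exact: hv.1 | exact: hv.2.1].
split; first by split; [exact: hp.1 | exact: hp.2.1].
split; first exact: sumE.
by rewrite -addrA sumE alg_last eK2E'.
Qed.
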